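(* Consider the normalised two-player, two-market Cournot game with per-period utility $u(x,a)=-2x(x+a)$ for a player playing $x$ against an opponent playing $a$. Let $c=-\frac{1}{1+\sqrt2}$ and let player 2's initial strategy be $a_0\in[-1,1]$. The players update alternately, each responding to the opponent's current strategy $a$ by switching to $c\,a$: at time $t=0$ player 1 updates (to $c\,a_0$), at $t=1$ player 2 updates (to $c^2a_0$), at $t=2$ player 1 updates, and so on. Let $u_t$ denote player 1's one-period utility at time $t$, evaluated at both players' strategies after the update at time $t$, and let $g=u_0=u(c\,a_0,a_0)$ be player 1's utility after the first move, measured relative to the equilibrium utility $0$. Then $$\sum_{t=0}^{\infty}u_t=\frac{(1+\sqrt2)\,g}{4},$$ which is strictly positive whenever $a_0\neq 0$.
   Context: Two players each have one unit of a homogeneous good (zero production and transportation cost) to split between two markets with inverse-linear demand. Strategies are normalised to numbers in $[-1,1]$ with $0$ the unique Cournot equilibrium split, and the normalised one-period utility (relative to the equilibrium utility, normalised to $0$) of a player playing $x$ against an opponent playing $a$ is $u(x,a)=-2x(x+a)$. The response rule $a\mapsto -\frac{a}{1+\sqrt2}$ is the one the paper calls the infinite time horizon optimal strategy. *)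

(* Defs.v *)
From Stdlib Require Import Reals Lra.
From Coquelicot Require Import Coquelicot.
Open Scope R_scope.

Definition u (x a : R) : R := -2 * x * (x + a).

(* Response coefficient of the infinite-horizon optimal strategy a |-> -a/(1+sqrt 2). *)
Definition c : R := - / (1 + sqrt 2).

(* Strategies (player 1, player 2) after the update at time t. *)
Fixpoint state (a0 : R) (t : nat) : R * R :=
  match t with
  | O => (c * a0, a0)
  | S n =>
      let p := state a0 n in
      if Nat.even (S n) then (c * snd p, snd p) else (fst p, c * fst p)
  end.

Definition util (a0 : R) (t : nat) : R := u (fst (state a0 t)) (snd (state a0 t)).

Definition gain (a0 : R) : R := u (c * a0) a0.

(* Main.v *)
Require Import Defs.
From Stdlib Require Import Reals Lra Lia.
From Coquelicot Require Import Coquelicot.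
Open Scope R_scope.

Lemma even_double k : Nat.even (2 * k) = true.
Proof. induction k as [|k IH]. reflexivity.
  replace (2 * S k)%nat with (S (S (2 * k))) by lia. simpl. exact IH. Qed.

Lemma state_form a0 k :
  state a0 (2 * k) = (c * (c^2)^k * a0, (c^2)^k * a0) /\
  state a0 (2 * k + 1) = (c * (c^2)^k * a0, c^2 * (c^2)^k * a0).
Proof.
  assert (H1 : forall k, state a0 (2 * k + 1) = (fst (state a0 (2*k)), c * fst (state a0 (2*k)))).
  { intro j. replace (2 * j + 1)%nat with (S (2 * j)) by lia. cbn [state].
    replace (S (2 * j)) with (2 * j + 1)%nat by lia.
    rewrite Nat.even_add, even_double. reflexivity. }
  induction k as [|k IH].
  - assert (E0 : state a0 (2*0) = (c * (c^2)^0 * a0, (c^2)^0 * a0)) by (simpl; f_equal; ring).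
    split. exact E0. rewrite H1, E0. simpl. f_equal; ring.
  - destruct IH as [IH1 IH2].
    assert (E : state a0 (2 * S k) = (c * snd (state a0 (2*k+1)), snd (state a0 (2*k+1)))).
    { replace (2 * S k)%nat with (S (2 * k + 1)) by lia. cbn [state].
      replace (S (2 * k + 1)) with (2 * S k)%nat by lia. rewrite even_double. reflexivity. }
    assert (E' : state a0 (2 * S k) = (c * (c^2)^S k * a0, (c^2)^S k * a0)).
    { rewrite E, IH2. simpl. f_equal; ring. }
    split. exact E'. rewrite H1, E'. simpl. f_equal; ring.
Qed.

Lemma util_form a0 t :
  util a0 t = -2 * a0^2 * (1 + c) *
    ((c + 1) / 2 * (c^2)^t + (c - 1) / 2 * (-(c^2))^t).
Proof.
  assert (P : forall k, (c^2)^(2*k) = (c^2)^k * (c^2)^k /\ (-(c^2))^(2*k) = (c^2)^k * (c^2)^k).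
  { intro k. rewrite !pow_sqr. replace (-(c^2) * -(c^2)) with (c^2*c^2) by ring.
    rewrite Rpow_mult_distr. split; reflexivity. }
  destruct (Nat.Even_or_Odd t) as [[k Hk]|[k Hk]]; subst t; unfold util, u;
  destruct (P k) as [P1 P2].
  - destruct (state_form a0 k) as [H _]. rewrite H. cbn [fst snd].
    rewrite P1, P2. set (y := (c^2)^k). field.
  - destruct (state_form a0 k) as [_ H]. rewrite H. cbn [fst snd].
    rewrite !pow_add, P1, P2. set (y := (c^2)^k). field.
Qed.

Lemma c_val : c = 1 - sqrt 2.
Proof.
  unfold c. assert (Hs : sqrt 2 * sqrt 2 = 2) by (apply sqrt_sqrt; lra).
  assert (0 < sqrt 2) by (apply sqrt_lt_R0; lra).
  field_simplify; [|lra]. apply Rminus_diag_uniq. field_simplify; [|lra].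
  replace (sqrt 2 ^ 2) with 2 by (simpl; lra). field. lra.
Qed.

Theorem theorem5 (a0 : R) (ha0 : -1 <= a0 <= 1) :
  gain a0 = util a0 0 /\
  is_series (util a0) ((1 + sqrt 2) * gain a0 / 4) /\
  (a0 <> 0 -> 0 < (1 + sqrt 2) * gain a0 / 4).
Proof.
  assert (Hs : sqrt 2 * sqrt 2 = 2) by (apply sqrt_sqrt; lra).
  assert (Hs1 : 1 < sqrt 2).
  { rewrite <- sqrt_1. apply sqrt_lt_1; lra. }
  assert (Hs2 : sqrt 2 < 2) by nra.
  split; [reflexivity|]. split.
  - eapply is_series_ext. intro n. symmetry. apply util_form.
    set (K := -2 * a0^2 * (1 + c)).
    assert (Hc2 : Rabs (c^2) < 1).
    { rewrite c_val. rewrite Rabs_right; nra. }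
    assert (Hc3 : Rabs (-(c^2)) < 1) by (rewrite Rabs_Ropp; exact Hc2).
    pose proof (is_series_geom _ Hc2) as G1.
    pose proof (is_series_geom _ Hc3) as G2.
    apply (is_series_scal_l ((c+1)/2)) in G1.
    apply (is_series_scal_l ((c-1)/2)) in G2.
    pose proof (is_series_plus _ _ _ _ G1 G2) as G3.
    apply (is_series_scal_l K) in G3.
    replace ((1 + sqrt 2) * gain a0 / 4) with
      (scal K (plus (scal ((c + 1) / 2) (/ (1 - c ^ 2))) (scal ((c - 1) / 2) (/ (1 - - c ^ 2))))).
    + eapply is_series_ext; [|exact G3]. intro n. reflexivity.
    + unfold gain, u, K, scal, plus; simpl; unfold mult; simpl. rewrite c_val.
      set (s := sqrt 2) in *.
      replace (/ (1 - (1 - s) * ((1 - s) * 1))) with ((s + 1) / 2).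
      2:{ field_simplify_eq; [|nra]. simpl. nra. }
      replace (/ (1 - - ((1 - s) * ((1 - s) * 1)))) with ((2 + s) / 4).
      2:{ field_simplify_eq; [|nra]. simpl. nra. }
      clearbody s. apply Rminus_diag_uniq. match goal with |- ?L = 0 => pose (LL := L) end. assert (E : LL = - a0^2 * (s*s-2)*(s-2)/4). { unfold LL. field. } unfold LL in E. rewrite E, Hs. field.
  - intro Ha. unfold gain, u. rewrite c_val.
    assert (0 < a0 * a0) by (apply Rsqr_pos_lt in Ha; unfold Rsqr in Ha; lra).
    assert (0 < sqrt 2 - 1) by lra. assert (0 < 2 - sqrt 2) by lra.
    replace ((1 + sqrt 2) * (-2 * ((1 - sqrt 2) * a0) * ((1 - sqrt 2) * a0 + a0)) / 4)
      with ((1 + sqrt 2) * (2 * (sqrt 2 - 1) * (2 - sqrt 2) * (a0 * a0)) / 4) by field.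
    apply Rmult_lt_0_compat; [|lra]. apply Rmult_lt_0_compat; [lra|].
    apply Rmult_lt_0_compat; [|lra]. apply Rmult_lt_0_compat; lra.
Qed.
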